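(* Let $X$ be an irreducible holomorphic symplectic manifold of $\mathrm{OG6}$ type with a marking $\eta\colon H^2(X,\mathbb{Z})\to\mathbf{L}$, where $\mathbf{L}=U^{\oplus3}\oplus[-2]^{\oplus2}$. If $G\subset\mathrm{O}(\mathbf{L})$ is a nonsymplectic group of prime order $p$, then $p\in\{2,3,5,7\}$.
   Context: An irreducible holomorphic symplectic manifold is a simply connected compact Kähler manifold $X$ with $H^0(X,\Omega^2_X)$ spanned by a nowhere degenerate holomorphic 2-form $\sigma_X$; $\mathrm{OG6}$ type means deformation equivalent to O'Grady's six-dimensional example, and then $H^2(X,\mathbb{Z})$ with the Beauville–Bogomolov–Fujiki form is isometric to $\mathbf{L}$. A marking is an isometry $\eta\colon H^2(X,\mathbb{Z})\to\mathbf{L}$. An isometry $\varphi\in\mathrm{O}(\mathbf{L})$ is nonsymplectic if $\varphi\otimes\mathbb{C}$ acts nontrivially on the line $\mathbb{C}\,\eta(\sigma_X)$; a cyclic group is nonsymplectic if generated by a nonsymplectic isometry. $U$ is the hyperbolic plane, $[n]$ the rank one lattice with generator of square $n$. *)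

(* Defs.v *)
From HB Require Import structures.
From mathcomp Require Import all_boot all_order all_algebra.
From mathcomp Require Import complex.
From mathcomp Require Import reals.
Set Implicit Arguments. Unset Strict Implicit. Unset Printing Implicit Defensive.
Import Order.TTheory GRing.Theory Num.Theory.
Local Open Scope ring_scope.

(* The lattice L = U^{+3} + [-2]^{+2} on Z^8, basis e_0..e_7:
   (e_0,e_1),(e_2,e_3),(e_4,e_5) hyperbolic planes, e_6, e_7 of square -2. *)
Definition LGram_entry (i j : nat) : int :=
  if [&& (i < 6)%N, (j < 6)%N, i./2 == j./2 & i != j] then 1
  else if (i == j) && (6 <= i)%N then -2 else 0.

Definition LGram : 'M[int]_8 := \matrix_(i < 8, j < 8) LGram_entry i j.

(* O(L): integral automorphisms of Z^8 preserving the form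
   (column-vector convention: x |-> g x). *)
Definition in_OL (g : 'M[int]_8) : bool :=
  (g \in unitmx) && (g^T *m LGram *m g == LGram).

Definition toC (C : numClosedFieldType) (m n : nat) (A : 'M[int]_(m, n))
  : 'M[C]_(m, n) := map_mx (fun z : int => z%:~R) A.

Definition formC (C : numClosedFieldType) (x y : 'cV[C]_8) : C :=
  (x^T *m toC C LGram *m y) ord0 ord0.

(* A period: the class eta(sigma_X) in L (x) C of a nowhere degenerate
   holomorphic 2-form: q(w) = 0 and q(w, conj w) > 0. *)
Definition is_period (C : numClosedFieldType) (w : 'cV[C]_8) : Prop :=
  formC w w = 0 /\ 0 < formC w (map_mx Num.conj w).

Definition nonsymplectic (C : numClosedFieldType) (phi : 'M[int]_8)
  (w : 'cV[C]_8) : Prop :=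
  exists2 lam : C, toC C phi *m w = lam *: w & lam != 1.

(* Main.v *)
Require Import Defs.
From HB Require Import structures.
From mathcomp Require Import all_boot all_order all_algebra all_field.
From mathcomp Require Import complex.
From mathcomp Require Import reals.
Import Order.TTheory GRing.Theory Num.Theory.
Local Open Scope ring_scope.

Local Open Scope complex_scope.
Lemma char_poly_tr (F : comNzRingType) n (A : 'M[F]_n) :
  char_poly A^T = char_poly A.
Proof.
rewrite /char_poly -det_tr; congr (\det _).
rewrite /char_poly_mx. by apply/matrixP => i j; rewrite !mxE eq_sym.
Qed.

Lemma toC_exp (C : numClosedFieldType) (A : 'M[int]_8) k :
  toC C (A ^+ k) = toC C A ^+ k.
Proof.
rewrite /toC; elim: k => [|k IH]; first by rewrite !expr0 map_mx1.
by rewrite !exprS -!mulmxE (map_mxM (intr : {rmorphism int -> C})) IH.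
Qed.

Lemma key (C : numClosedFieldType) (A : 'M[int]_8) (w : 'cV[C]_8) (lam : C) p :
  prime p -> A ^+ p = 1 -> w != 0 -> toC C A *m w = lam *: w -> lam != 1 ->
  (p <= 9)%N.
Proof.
move=> pr Ap wn0 Aw lam1.
have p_gt0 : (0 < p)%N by apply: prime_gt0.
have powk k : toC C A ^+ k *m w = lam ^+ k *: w.
  elim: k => [|k IH]; first by rewrite !expr0 mul1mx scale1r.
  by rewrite exprS -mulmxE -mulmxA IH -scalemxAr Aw scalerA -exprSr.
have lamp : lam ^+ p = 1.
  have := powk p; rewrite -toC_exp Ap /toC map_mx1 mul1mx => /esym /eqP.
  rewrite -subr_eq0 -{2}(scale1r w) -scalerBl scaler_eq0 (negbTE wn0) orbF.
  by rewrite subr_eq0 => /eqP.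
have rootC : root (char_poly (toC C A)) lam.
  rewrite -char_poly_tr -eigenvalue_root_char; apply/eigenvalueP.
  exists w^T; last by rewrite trmx_eq0.
  by rewrite -trmx_mul Aw linearZ.
pose P : {poly rat} := map_poly intr (char_poly A).
pose Phi (F : fieldType) : {poly F} := \sum_(i < p) 'X^i.
pose G := gcdp P (Phi _).
have sizeP : size P = 9%N.
  by rewrite size_map_inj_poly ?size_char_poly //; apply: intr_inj.
have Pn0 : P != 0 by rewrite -size_poly_eq0 sizeP.
have Gn0 : G != 0 by rewrite gcdp_eq0 negb_and Pn0.
have mapPhi (F : fieldType) (f : {rmorphism rat -> F}) : map_poly f (Phi _) = Phi F.
  by rewrite rmorph_sum; apply: eq_bigr => i _; rewrite rmorphXn /= map_polyX.
have rootPhi (F : fieldType) (x : F) : x ^+ p = 1 -> x != 1 -> root (Phi F) x.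
  move=> xp x1; rewrite /root horner_sum.
  have : (x - 1) * (\sum_(i < p) x ^+ i) = 0 by rewrite -subrX1 xp subrr.
  move/eqP; rewrite mulf_eq0 subr_eq0 (negbTE x1) /= => H.
  by under eq_bigr do rewrite hornerXn.
have sizeG : (1 < size G)%N.
  rewrite -(size_map_poly (ratr : {rmorphism rat -> C})).
  apply: (root_size_gt1 (a := lam)); first by rewrite map_poly_eq0.
  rewrite gcdp_map root_gcd mapPhi rootPhi // andbT.
  suff -> : map_poly ratr P = char_poly (toC C A) :> {poly C} by [].
  rewrite -map_poly_comp (eq_map_poly (fun z => rmorph_int (ratr : {rmorphism rat -> C}) z)).
  by rewrite map_char_poly.
have [z rz] : exists z : algC, root (map_poly ratr G) z.
  by apply/closed_rootP; rewrite size_map_poly; case: (size G) sizeG => [|[]].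
have : root (map_poly ratr (Phi _)) z.
  by move: rz; rewrite gcdp_map root_gcd => /andP[].
rewrite mapPhi => rPhi.
have z1 : z != 1.
  apply: contraTneq rPhi => ->; rewrite /root horner_sum.
  under eq_bigr do rewrite hornerXn expr1n.
  by rewrite sumr_const card_ord pnatr_eq0 -lt0n.
have zp : z ^+ p = 1.
  apply/eqP; rewrite -subr_eq0 subrX1.
  move: rPhi; rewrite /root horner_sum.
  under eq_bigr do rewrite hornerXn.
  by move/eqP => ->; rewrite mulr0.
have primz : p.-primitive_root z.
  have [m pm mp] := prim_order_exists p_gt0 zp.
  have [m1|m1] := eqVneq m 1%N.
    by move: (prim_expr_order pm); rewrite m1 expr1 => /eqP; rewrite (negbTE z1).
  by move/(prime_nt_dvdP pr m1): mp => <-.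
have [pf [Dpf _] dvpf] := minCpolyP z.
have := dvpf G; rewrite rz => /esym pfG.
have : size pf = p.
  rewrite -(size_map_poly (ratr : {rmorphism rat -> algC})) -Dpf.
  by rewrite (minCpoly_cyclotomic primz) size_cyclotomic totient_prime // prednK.
move=> <-.
apply: leq_trans (dvdp_leq Gn0 pfG) _.
by rewrite -sizeP dvdp_leq // dvdp_gcdl.
Qed.

Lemma small_primes p : prime p -> (p <= 9)%N -> p \in [:: 2; 3; 5; 7]%N.
Proof. by case: p => [|[|[|[|[|[|[|[|[|[|p]]]]]]]]]]. Qed.

Theorem proposition3p3 (R : realType) (omega : 'cV[R[i]]_8)
  (p : nat) (phi : 'M[int]_8) :
  is_period omega ->
  in_OL phi ->
  prime p -> phi ^+ p = 1 -> phi != 1 ->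
  nonsymplectic phi omega ->
  p \in [:: 2; 3; 5; 7]%N.
Proof.
move=> [_ hpos] _ pr Ap _ [lam Aw lam1].
have wn0 : omega != 0.
  apply: contraTneq hpos => ->.
  by rewrite /Defs.formC map_mx0 trmx0 !mul0mx mxE ltxx.
have := @key _ phi omega lam p pr Ap wn0 Aw lam1.
exact: small_primes.
Qed.
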